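(* Let $\sum_{n=1}^{\infty}x_n$ be an absolutely convergent real series whose associated function $f(\chi_A)=\sum_{n\in A}x_n$ is injective on $W=\{\chi_A\in\{0,1\}^{\mathbb{N}} : A \text{ is infinite and } \mathbb{N}\setminus A\text{ is infinite}\}$. Then for all ideals $I,J$ on $\mathbb{N}$ containing $\mathrm{Fin}$ we have $A_{I\cap J}(x_n)=A_I(x_n)\cap A_J(x_n)$.
   Context: An ideal on $\mathbb{N}$ is a family $I\subseteq P(\mathbb{N})$ closed under finite unions and subsets with $\mathbb{N}\notin I$; $\mathrm{Fin}$ is the ideal of finite sets. Subsets of $\mathbb{N}$ are identified with characteristic functions in $\{0,1\}^{\mathbb{N}}$. $A_I(x_n)=\{\sum_{n\in A}x_n : A\in I\}$. *)

(* Defs.v *)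
From Stdlib Require Import Reals.
Open Scope R_scope.

(* Subsets of nat are identified with characteristic functions nat -> bool. *)
Definition subset_of (A B : nat -> bool) : Prop :=
  forall n, A n = true -> B n = true.

Definition finite_set (A : nat -> bool) : Prop :=
  exists N, forall n, A n = true -> (n < N)%nat.

Definition infinite_set (A : nat -> bool) : Prop :=
  forall N, exists n, (N <= n)%nat /\ A n = true.

Definition compl (A : nat -> bool) : nat -> bool := fun n => negb (A n).

Definition union (A B : nat -> bool) : nat -> bool := fun n => orb (A n) (B n).

Definition W (A : nat -> bool) : Prop := infinite_set A /\ infinite_set (compl A).

Definition is_ideal (I : (nat -> bool) -> Prop) : Prop :=
  (forall A B, I A -> I B -> I (union A B)) /\
  (forall A B, I B -> subset_of A B -> I A) /\
  ~ I (fun _ => true).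

Definition contains_Fin (I : (nat -> bool) -> Prop) : Prop :=
  forall A, finite_set A -> I A.

Definition ideal_inter (I J : (nat -> bool) -> Prop) : (nat -> bool) -> Prop :=
  fun A => I A /\ J A.

Definition abs_convergent (x : nat -> R) : Prop :=
  exists l, infinite_sum (fun n => Rabs (x n)) l.

Definition subsum (x : nat -> R) (A : nat -> bool) (s : R) : Prop :=
  infinite_sum (fun n => if A n then x n else 0) s.

Definition f_injective_on_W (x : nat -> R) : Prop :=
  forall A B s, W A -> W B -> subsum x A s -> subsum x B s -> A = B.

Definition achievement_set (I : (nat -> bool) -> Prop) (x : nat -> R) (s : R) : Prop :=
  exists A, I A /\ subsum x A s.

(* Main.v *)
Require Import Defs.
From Stdlib Require Import Reals Classical Lia.
Open Scope R_scope.

Lemma not_inf_fin A : ~ infinite_set A -> finite_set A.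
Proof.
  intro H. apply NNPP; intro H2. apply H; intro N. apply NNPP; intro H3.
  apply H2. exists N. intros n Hn. destruct (Nat.lt_ge_cases n N); auto.
  exfalso; apply H3; exists n; split; [lia|auto].
Qed.

Lemma cofin I A : is_ideal I -> contains_Fin I -> I A -> infinite_set (compl A).
Proof.
  intros [hu [hs hn]] hF HA. apply NNPP; intro H. apply hn.
  apply hs with (union A (compl A)).
  - apply hu; auto. apply hF, not_inf_fin, H.
  - intros n _. unfold union, compl. destruct (A n); reflexivity.
Qed.

Lemma inW I A : is_ideal I -> contains_Fin I -> I A -> ~ finite_set A -> W A.
Proof.
  intros hI hF HA Hf. split.
  - apply NNPP; intro H; apply Hf, not_inf_fin, H.
  - eapply cofin; eauto.
Qed.

Theorem mainTheorem19 (x : nat -> R)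
  (habs : abs_convergent x) (hinj : f_injective_on_W x) :
  forall (I J : (nat -> bool) -> Prop),
    is_ideal I -> is_ideal J -> contains_Fin I -> contains_Fin J ->
    forall s : R,
      achievement_set (ideal_inter I J) x s <->
      (achievement_set I x s /\ achievement_set J x s).
Proof.
  intros I J hI hJ hIF hJF s. split.
  - intros [A [[HI HJ] Hs]]. split; exists A; auto.
  - intros [[A [HA HsA]] [B [HB HsB]]].
    destruct (classic (finite_set A)) as [Af|Anf].
    { exists A; split; [split; auto|auto]. }
    destruct (classic (finite_set B)) as [Bf|Bnf].
    { exists B; split; [split; auto|auto]. }
    assert (A = B) by (eapply hinj; [eapply inW with (I:=I) | eapply inW with (I:=J) | |]; eauto).
    subst. exists B; split; [split|]; auto.
Qed.
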